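(* Every flat ado-semilattice is simple, hence subdirectly irreducible.
   Context: A flat ado-semilattice is an algebra $(S,\sqcup,\cap)$ with an element $0\in S$ such that $a\cap a=a$, $0\cap a=a\cap 0=0$ for all $a$, $a\cap b=0$ for distinct $a,b$, $0\sqcup a=a$ for all $a$, and $a\sqcup b=a$ whenever $a\neq 0$ (so the order is flat: $0$ is least and all other elements are maximal). An algebra is simple if every homomorphism from it into an algebra of the same type is either injective or constant. *)

(* Defs.v *)
Definition injective {A B : Type} (f : A -> B) : Prop :=
  forall x y, f x = f y -> x = y.

Definition is_hom {A B : Type} (jA mA : A -> A -> A) (jB mB : B -> B -> B)
  (f : A -> B) : Prop :=
  forall x y, f (jA x y) = jB (f x) (f y) /\ f (mA x y) = mB (f x) (f y).

Definition flat_ado_semilattice (S : Type) (join meet : S -> S -> S) (z : S)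
  : Prop :=
  (forall a, meet a a = a) /\
  (forall a, meet z a = z /\ meet a z = z) /\
  (forall a b, a <> b -> meet a b = z) /\
  (forall a, join z a = a) /\
  (forall a b, a <> z -> join a b = a).

Definition simple_alg (S : Type) (join meet : S -> S -> S) : Prop :=
  forall (B : Type) (jB mB : B -> B -> B) (f : S -> B),
    is_hom join meet jB mB f ->
    injective f \/ (forall x y, f x = f y).

(* Subdirectly irreducible (Birkhoff): whenever a family of homomorphisms
   out of S jointly separates points (i.e. S embeds subdirectly into the
   product of the images), one of them is already injective. *)
Definition subdirectly_irreducible (S : Type) (join meet : S -> S -> S)
  : Prop :=
  forall (I : Type) (A : I -> Type) (jA mA : forall i, A i -> A i -> A i)
         (f : forall i, S -> A i),
    (forall i, is_hom join meet (jA i) (mA i) (f i)) ->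
    (forall x y, (forall i, f i x = f i y) -> x = y) ->
    exists i, injective (f i).

Definition nontrivial (S : Type) : Prop := exists x y : S, x <> y.

(* Main.v *)
Require Import Defs.
From Stdlib Require Import Classical.

Theorem corollary4p8 (S : Type) (join meet : S -> S -> S) (z : S) :
  flat_ado_semilattice S join meet z ->
  simple_alg S join meet /\
  (nontrivial S -> subdirectly_irreducible S join meet).
Proof.
  intros [Hmm [Hmz [Hmd [Hjz Hjn]]]].
  assert (Hs : simple_alg S join meet).
  { intros B jB mB f Hf.
    destruct (classic (injective f)) as [Hi|Hi]; [left; exact Hi|right].
    assert (Hc : exists c, c <> z /\ f c = f z).
    { apply NNPP; intro Hn. apply Hi. intros a b Hab.
      apply NNPP; intro Hne.
      destruct (classic (a = z)) as [Ha|Ha].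
      - subst a. apply Hn. exists b. split; [intro; subst; auto|auto].
      - destruct (classic (b = z)) as [Hb|Hb].
        + subst b. apply Hn. exists a. auto.
        + apply Hn. exists a. split; auto.
          rewrite <- (Hmd a b Hne), <- (Hmm a) at 1.
          destruct (Hf a a) as [_ E1]. destruct (Hf a b) as [_ E2].
          rewrite E1, E2, Hab. reflexivity. }
    destruct Hc as [c [Hcz Hfc]].
    assert (K : forall x, f x = f c).
    { intro x. rewrite <- (Hjz x) at 1. destruct (Hf z x) as [E _].
      rewrite E, <- Hfc. destruct (Hf c x) as [E' _]. rewrite <- E', Hjn; auto. }
    intros x y. rewrite (K x), (K y). reflexivity. }
  split; [exact Hs|].
  intros [x [y Hxy]] I A jA mA f Hf Hsep.
  apply NNPP; intro Hn.
  apply Hxy, Hsep. intro i.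
  destruct (Hs _ _ _ (f i) (Hf i)) as [Hi|Hi].
  - exfalso; apply Hn; exists i; exact Hi.
  - apply Hi.
Qed.
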